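(* Let $p$ be one of $(123,\emptyset,\{0\})$, $(123,\{0\},\{2\})$, $(132,\emptyset,\{0\})$, $(132,\{0\},\{2\})$, or any pattern in the same symmetry class as one of these. Then for all $n\ge1$, \[a_n(p)=\sum_{k=0}^{n-1}\frac{(n-1)!}{k!}.\]
   Context: For $n\ge1$, $\mathcal S_n$ is the set of permutations $\pi=\pi_1\cdots\pi_n$ of $[n]$. A bi-vincular pattern of length $k$ is a triple $p=(\sigma,X,Y)$ with $\sigma\in\mathcal S_k$ and $X,Y\subseteq\{0,1,\dots,k\}$. A permutation $\pi\in\mathcal S_n$ contains $p$ if there are indices $1\le i_1<\dots<i_k\le n$ such that $(\pi_{i_1},\dots,\pi_{i_k})$ is order-isomorphic to $\sigma$ and, letting $j_1<\dots<j_k$ be the values $\pi_{i_1},\dots,\pi_{i_k}$ sorted increasingly and setting $i_0=j_0=0$, $i_{k+1}=j_{k+1}=n+1$, one has $i_{x+1}=i_x+1$ for all $x\in X$ and $j_{y+1}=j_y+1$ for all $y\in Y$. Otherwise $\pi$ avoids $p$; $a_n(p)$ is the number of $\pi\in\mathcal S_n$ avoiding $p$. Symmetries: $p^{i}=(\sigma^{-1},Y,X)$, $p^{r}=(\sigma^{r},\{k-x:x\in X\},Y)$, $p^{c}=(\sigma^{c},X,\{k-y:y\in Y\})$ with $\sigma^r_j=\sigma_{k+1-j}$, $\sigma^c_j=k+1-\sigma_j$; the symmetry class of $p$ consists of all patterns obtained from $p$ by finitely many applications of these maps. *)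

(* Defs.v *)
From mathcomp Require Import all_boot all_fingroup.
Set Implicit Arguments. Unset Strict Implicit. Unset Printing Implicit Defensive.

(* Conventions: a permutation of [n] is an element of 'S_n acting on
   'I_n = {0,..,n-1}; the 0-based value v stands for the 1-based value v+1.
   Positions are likewise 0-based internally; the boundary conventions
   i_0 = j_0 = 0, i_{k+1} = j_{k+1} = n+1 are in 1-based numbering. *)

Record bvpat := BVPat {
  bk : nat;
  bsig : 'S_bk;
  bX : {set 'I_bk.+1};
  bY : {set 'I_bk.+1} }.

Section Containment.
Variables (n : nat) (pi : 'S_n) (p : bvpat).
Local Notation k := (bk p).
Local Notation sigma := (bsig p).

(* 1-based i_x for x in {0..k+1}, given the occurrence positions f. *)
Definition occ_pos (f : 'I_k -> 'I_n) (x : nat) : nat :=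
  if x == 0 then 0
  else if k < x then n.+1
  else (oapp (fun o : 'I_k => val (f o)) 0 (insub x.-1)).+1.

(* 1-based j_x for x in {0..k+1}: the x-th smallest value of the occurrence,
   which is the value at the pattern entry of rank x, i.e. sigma^-1 (x). *)
Definition occ_val (f : 'I_k -> 'I_n) (x : nat) : nat :=
  if x == 0 then 0
  else if k < x then n.+1
  else (oapp (fun o : 'I_k => val (pi (f ((sigma^-1)%g o)))) 0 (insub x.-1)).+1.

Definition occurrence (f : 'I_k -> 'I_n) : bool :=
  [&& [forall a : 'I_k, forall b : 'I_k, (a < b) ==> (f a < f b)],
      [forall a : 'I_k, forall b : 'I_k,
          (pi (f a) < pi (f b)) == (sigma a < sigma b)],
      [forall x in bX p, occ_pos f (val x).+1 == (occ_pos f (val x)).+1] &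
      [forall y in bY p, occ_val f (val y).+1 == (occ_val f (val y)).+1]].

Definition contains : bool := [exists f : {ffun 'I_k -> 'I_n}, occurrence f].

End Containment.

Definition avoids n (pi : 'S_n) (p : bvpat) : bool := ~~ contains pi p.

Definition a_n (p : bvpat) (n : nat) : nat := #|[set pi : 'S_n | avoids pi p]|.

Definition srev k (s : 'S_k) : 'S_k :=
  perm (inj_comp (@perm_inj _ s) (@rev_ord_inj k)).
Definition scompl k (s : 'S_k) : 'S_k :=
  perm (inj_comp (@rev_ord_inj k) (@perm_inj _ s)).

Definition pat_i (p : bvpat) : bvpat :=
  @BVPat (bk p) ((bsig p)^-1)%g (bY p) (bX p).
Definition pat_r (p : bvpat) : bvpat :=
  @BVPat (bk p) (srev (bsig p)) [set rev_ord x | x in bX p] (bY p).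
Definition pat_c (p : bvpat) : bvpat :=
  @BVPat (bk p) (scompl (bsig p)) (bX p) [set rev_ord y | y in bY p].

Inductive sym_class (p : bvpat) : bvpat -> Prop :=
  | sym_refl : sym_class p p
  | sym_i q : sym_class p q -> sym_class p (pat_i q)
  | sym_r q : sym_class p q -> sym_class p (pat_r q)
  | sym_c q : sym_class p q -> sym_class p (pat_c q).

(* the permutations 123 and 132 in 'S_3 (0-based: 012 and 021) *)
Definition perm123 : 'S_3 := 1%g.
Definition perm132 : 'S_3 := tperm (@Ordinal 3 1 isT) (@Ordinal 3 2 isT).

Definition o0 : 'I_4 := @Ordinal 4 0 isT.
Definition o2 : 'I_4 := @Ordinal 4 2 isT.

Definition p123_e_0 : bvpat := @BVPat 3 perm123 set0 [set o0].
Definition p123_0_2 : bvpat := @BVPat 3 perm123 [set o0] [set o2].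
Definition p132_e_0 : bvpat := @BVPat 3 perm132 set0 [set o0].
Definition p132_0_2 : bvpat := @BVPat 3 perm132 [set o0] [set o2].

(* Main.v *)
Require Import Defs.
From mathcomp Require Import all_boot all_fingroup zify.
Set Implicit Arguments. Unset Strict Implicit. Unset Printing Implicit Defensive.

Section Occ.
Variables (n : nat) (pi : 'S_n) (p : bvpat).
Implicit Types f : 'I_(bk p) -> 'I_n.
Lemma occ_posK f : occ_pos f (bk p).+1 = n.+1.
Proof. by rewrite /occ_pos /= ltnSn. Qed.
Lemma occ_posS f (o : 'I_(bk p)) : occ_pos f (val o).+1 = (val (f o)).+1.
Proof.
rewrite /occ_pos /= ltnNge ltn_ord /= insubT //= => H.
by congr (val (f _)).+1; apply: val_inj.
Qed.
Lemma occ_valK f : occ_val pi f (bk p).+1 = n.+1.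
Proof. by rewrite /occ_val /= ltnSn. Qed.
Lemma occ_valS f (o : 'I_(bk p)) :
  occ_val pi f (val o).+1 = (val (pi (f ((bsig p)^-1 o)%g))).+1.
Proof.
rewrite /occ_val /= ltnNge ltn_ord /= insubT //= => H.
by congr (val (pi (f (_ _)))).+1; apply: val_inj.
Qed.
Lemma occ_pos_le f x : occ_pos f x <= n.+1.
Proof.
rewrite /occ_pos; case: eqP => // _; case: ltnP => // _.
by case: insub => [o|] //=; rewrite ltnS ltnW.
Qed.
Lemma occ_val_le f x : occ_val pi f x <= n.+1.
Proof.
rewrite /occ_val; case: eqP => // _; case: ltnP => // _.
by case: insub => [o|] //=; rewrite ltnS ltnW.
Qed.
End Occ.

Lemma natk_cases k y : [\/ y = 0, k < y | exists o : 'I_k, y = (val o).+1].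
Proof.
case: y => [|y]; first by constructor 1.
case: (ltnP y k) => H; last by constructor 2.
by constructor 3; exists (Ordinal H).
Qed.

Lemma occ_pos_gt n (p : bvpat) (f : 'I_(bk p) -> 'I_n) y : bk p < y -> occ_pos f y = n.+1.
Proof. by move=> H; rewrite /occ_pos H; case: y H. Qed.
Lemma occ_val_gt n pi (p : bvpat) (f : 'I_(bk p) -> 'I_n) y : bk p < y -> occ_val pi f y = n.+1.
Proof. by move=> H; rewrite /occ_val H; case: y H. Qed.

Lemma ltn_rev m (x y : 'I_m) : (rev_ord x < rev_ord y) = (y < x).
Proof. have := ltn_ord x; have := ltn_ord y; rewrite /=; move=> *; apply/idP/idP; lia. Qed.

Lemma srevE k (s : 'S_k) x : srev s x = s (rev_ord x). Proof. by rewrite permE. Qed.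
Lemma scomplE k (s : 'S_k) x : scompl s x = rev_ord (s x). Proof. by rewrite permE. Qed.
Lemma srevK k : involutive (@srev k).
Proof. by move=> s; apply/permP => x; rewrite !srevE rev_ordK. Qed.
Lemma scomplK k : involutive (@scompl k).
Proof. by move=> s; apply/permP => x; rewrite !scomplE rev_ordK. Qed.
Lemma srevV k (s : 'S_k) o : ((srev s)^-1)%g o = rev_ord ((s^-1)%g o).
Proof. by apply: (@perm_inj _ (srev s)); rewrite permKV srevE rev_ordK permKV. Qed.
Lemma scomplV k (s : 'S_k) o : ((scompl s)^-1)%g o = (s^-1)%g (rev_ord o).
Proof. by apply: (@perm_inj _ (scompl s)); rewrite permKV scomplE permKV rev_ordK. Qed.

Lemma revsetK k (X : {set 'I_k}) : [set rev_ord x | x in [set rev_ord x | x in X]] = X.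
Proof.
rewrite -imset_comp (eq_imset _ (@rev_ordK k)); exact: imset_id.
Qed.

Lemma pat_iK p : pat_i (pat_i p) = p.
Proof. by case: p => k s X Y; rewrite /pat_i /= invgK. Qed.
Lemma pat_rK p : pat_r (pat_r p) = p.
Proof. by case: p => k s X Y; rewrite /pat_r /= srevK revsetK. Qed.
Lemma pat_cK p : pat_c (pat_c p) = p.
Proof. by case: p => k s X Y; rewrite /pat_c /= scomplK revsetK. Qed.

Lemma flip_adj (P Q : nat -> nat) N k x0 : x0 <= k ->
  (forall y, y <= k.+1 -> Q y = N.+1 - P (k.+1 - y)) ->
  P x0.+1 = (P x0).+1 -> P x0.+1 <= N.+1 -> Q (k - x0).+1 = (Q (k - x0)).+1.
Proof.
move=> Hx HQ HP Hle; rewrite !HQ; try lia.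
have -> : k.+1 - (k - x0).+1 = x0 by lia.
have -> : k.+1 - (k - x0) = x0.+1 by lia.
lia.
Qed.

Lemma occurrenceP n (pi : 'S_n) p (f : 'I_(bk p) -> 'I_n) :
  reflect [/\ forall a b : 'I_(bk p), a < b -> f a < f b,
              forall a b : 'I_(bk p), (pi (f a) < pi (f b)) = (bsig p a < bsig p b),
              forall x : 'I_(bk p).+1, x \in bX p -> occ_pos f (val x).+1 = (occ_pos f (val x)).+1 &
              forall y : 'I_(bk p).+1, y \in bY p -> occ_val pi f (val y).+1 = (occ_val pi f (val y)).+1]
   (occurrence pi f).
Proof.
apply: (iffP and4P) => [[/forallP H1 /forallP H2 /forall_inP H3 /forall_inP H4]|[H1 H2 H3 H4]];
  split.
- by move=> a b; move/forallP: (H1 a) => /(_ b) /implyP.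
- by move=> a b; move/forallP: (H2 a) => /(_ b) /eqP.
- by move=> x /H3 /eqP.
- by move=> y /H4 /eqP.
- by apply/forallP => a; apply/forallP => b; apply/implyP; apply: H1.
- by apply/forallP => a; apply/forallP => b; apply/eqP; apply: H2.
- by apply/forall_inP => x /H3 ->.
- by apply/forall_inP => x /H4 ->.
Qed.

Lemma inc_iff n k (f : 'I_k -> 'I_n) : (forall a b : 'I_k, a < b -> f a < f b) ->
  forall a b, (f a < f b) = (a < b).
Proof.
move=> H a b; apply/idP/idP; last exact: H.
case: (ltngtP a b) => // [Hba|/val_inj ->]; last by rewrite ltnn.
by move=> Hab; have := H _ _ Hba; rewrite ltnNge ltnW.
Qed.

Lemma trans_i n (pi : 'S_n) p : contains pi p -> contains (pi^-1)%g (pat_i p).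
Proof.
move=> /existsP [f /occurrenceP [H1 H2 H3 H4]].
set s := bsig p.
apply/existsP; exists [ffun r : 'I_(bk p) => pi (f ((s^-1)%g r))].
have Epos : forall y, @occ_pos _ (pat_i p) [ffun r : 'I_(bk p) => pi (f ((s^-1)%g r))] y
                      = occ_val pi f y.
  move=> y; case: (natk_cases (bk p) y) => [->|Hy|[o ->]] //.
    by rewrite occ_pos_gt // occ_val_gt.
  by rewrite (@occ_posS _ (pat_i p)) occ_valS ffunE.
have Eval : forall y, @occ_val _ (pi^-1)%g (pat_i p) [ffun r : 'I_(bk p) => pi (f ((s^-1)%g r))] y
                      = occ_pos f y.
  move=> y; case: (natk_cases (bk p) y) => [->|Hy|[o ->]] //.
    by rewrite occ_val_gt // occ_pos_gt.
  rewrite (@occ_valS _ _ (pat_i p)) occ_posS ffunE /= invgK permK /s permK //.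
apply/(@occurrenceP _ _ (pat_i p)); split => /=.
- by move=> a b Hab; rewrite !ffunE H2 !permKV.
- by move=> a b; rewrite !ffunE !permK inc_iff.
- by move=> x Hx; rewrite !Epos H4.
- by move=> y Hy; rewrite !Eval H3.
Qed.

Lemma trans_r n (pi : 'S_n) p : contains pi p -> contains (srev pi) (pat_r p).
Proof.
move=> /existsP [f /occurrenceP [H1 H2 H3 H4]].
set g := [ffun a : 'I_(bk p) => rev_ord (f (rev_ord a))].
apply/existsP; exists g.
have Epos : forall y, y <= (bk p).+1 -> @occ_pos _ (pat_r p) g y
                      = n.+1 - occ_pos f ((bk p).+1 - y).
  move=> y Hy; case: (natk_cases (bk p) y) => [->|Hy'|[o ->]].
  - by rewrite subn0 occ_posK subnn.
  - have -> : y = (bk p).+1 by apply/eqP; rewrite eqn_leq Hy Hy'.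
    by rewrite (@occ_pos_gt _ (pat_r p)) // subnn.
  have -> : (bk p).+1 - (val o).+1 = (val (rev_ord o)).+1 by rewrite /=; have := ltn_ord o; lia.
  rewrite (@occ_posS _ (pat_r p)) occ_posS ffunE /=.
  by case: (f (rev_ord o)) => x Hx /=; lia.
have Eval : forall y, @occ_val _ (srev pi) (pat_r p) g y = occ_val pi f y.
  move=> y; case: (natk_cases (bk p) y) => [->|Hy|[o ->]] //.
    by rewrite (@occ_val_gt _ _ (pat_r p)) // occ_val_gt.
  by rewrite (@occ_valS _ _ (pat_r p)) occ_valS ffunE /= srevV srevE !rev_ordK.
apply/(@occurrenceP _ _ (pat_r p)); split => /=.
- by move=> a b Hab; rewrite !ffunE ltn_rev H1 // ltn_rev.
- by move=> a b; rewrite !ffunE !srevE !rev_ordK H2.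
- move=> x /imsetP [x0 Hx0 ->].
  have -> : val (rev_ord x0) = bk p - x0 by rewrite /=; have := ltn_ord x0; lia.
  apply: (flip_adj (P := occ_pos f) (N := n)).
  + by rewrite -ltnS.
  + exact: Epos.
  + exact: H3.
  + exact: occ_pos_le.
- by move=> y Hy; rewrite !Eval H4.
Qed.

Lemma trans_c n (pi : 'S_n) p : contains pi p -> contains (scompl pi) (pat_c p).
Proof.
move=> /existsP [f /occurrenceP [H1 H2 H3 H4]].
apply/existsP; exists f.
have Eval : forall y, y <= (bk p).+1 -> @occ_val _ (scompl pi) (pat_c p) f y
                      = n.+1 - occ_val pi f ((bk p).+1 - y).
  move=> y Hy; case: (natk_cases (bk p) y) => [->|Hy'|[o ->]].
  - by rewrite subn0 occ_valK subnn.
  - have -> : y = (bk p).+1 by apply/eqP; rewrite eqn_leq Hy Hy'.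
    by rewrite (@occ_val_gt _ _ (pat_c p)) // subnn.
  have -> : (bk p).+1 - (val o).+1 = (val (rev_ord o)).+1 by rewrite /=; have := ltn_ord o; lia.
  rewrite (@occ_valS _ _ (pat_c p)) occ_valS /= scomplV scomplE /=.
  by case: (pi (f ((bsig p)^-1%g (rev_ord o)))) => x Hx /=; lia.
apply/(@occurrenceP _ _ (pat_c p)); split => /=.
- exact: H1.
- by move=> a b; rewrite !scomplE !ltn_rev H2.
- exact: H3.
- move=> x /imsetP [x0 Hx0 ->].
  have -> : val (rev_ord x0) = bk p - x0 by rewrite /=; have := ltn_ord x0; lia.
  apply: (flip_adj (P := occ_val pi f) (N := n)).
  + by rewrite -ltnS.
  + exact: Eval.
  + exact: H4.
  + exact: occ_val_le.
Qed.

Lemma an_sym (g : bvpat -> bvpat) n (phi : 'S_n -> 'S_n) :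
  involutive phi -> (forall p (pi : 'S_n), contains pi p -> contains (phi pi) (g p)) ->
  (forall p, g (g p) = p) -> forall p, a_n (g p) n = a_n p n.
Proof.
move=> phiK Ht gK p.
have E : forall pi, contains (phi pi) (g p) = contains pi p.
  move=> pi; apply/idP/idP; last exact: Ht.
  by move/Ht; rewrite phiK gK.
rewrite /a_n -(card_preimset _ (inv_inj phiK)); apply: eq_card => pi.
by rewrite !inE /avoids E.
Qed.

Lemma an_i p n : a_n (pat_i p) n = a_n p n.
Proof. apply: (an_sym (phi := fun s : 'S_n => (s^-1)%g)) => //; [exact: invgK|move=> q s; exact: trans_i|exact: pat_iK]. Qed.
Lemma an_r p n : a_n (pat_r p) n = a_n p n.
Proof. apply: (an_sym (phi := @srev n)) => //; [exact: srevK|move=> q s; exact: trans_r|exact: pat_rK]. Qed.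
Lemma an_c p n : a_n (pat_c p) n = a_n p n.
Proof. apply: (an_sym (phi := @scompl n)) => //; [exact: scomplK|move=> q s; exact: trans_c|exact: pat_cK]. Qed.

Lemma an_class p q n : sym_class p q -> a_n q n = a_n p n.
Proof. by elim=> // r _ IH; rewrite ?an_i ?an_r ?an_c. Qed.

Definition cmpb (b : bool) (x y : nat) := if b then x < y else y < x.
Definition Dp n (b : bool) (s : 'S_n) :=
  [forall a : 'I_n, forall i : 'I_n, forall j : 'I_n, [&& val (s a) == 0, a < i & i < j] ==> cmpb b (s i) (s j)].
Definition Mono n (b : bool) (s : 'S_n) :=
  [forall i : 'I_n, forall j : 'I_n, (i < j) ==> cmpb b (s i) (s j)].

Lemma cmpb_bump b h x y : cmpb b (bump h x) (bump h y) = cmpb b x y.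
Proof. by rewrite /cmpb /bump; case: b; case: (leqP h x); case: (leqP h y) => /= *; apply/idP/idP; lia. Qed.

Lemma mono_inc_id n (f : 'I_n -> nat) : (forall i j : 'I_n, i < j -> f i < f j) ->
  (forall i, f i < n) -> forall i, f i = i.
Proof.
move=> H Hb.
have ge : forall m (i : 'I_n), (i : nat) = m -> m <= f i.
  elim=> // m IH i Hi.
  have Hm : m < n by have := ltn_ord i; rewrite Hi; lia.
  have := IH (Ordinal Hm) erefl; have := H (Ordinal Hm) i; rewrite /= Hi => /(_ (ltnSn m)); lia.
have le : forall d (i : 'I_n), (i : nat) + d.+1 = n -> f i <= i.
  elim=> [|d IH] i Hi; first by have := Hb i; lia.
  have Hm : i.+1 < n by lia.
  have /IH : ((Ordinal Hm : 'I_n) : nat) + d.+1 = n by rewrite /=; lia.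
  have := H i (Ordinal Hm) (ltnSn i); rewrite /=; lia.
move=> i; apply/eqP; rewrite eqn_leq (ge i i erefl) (le (n - i.+1) i) //.
have := ltn_ord i; lia.
Qed.

Definition revp n : 'S_n := perm (@rev_ord_inj n).

Lemma Mono_card n b : #|[set s : 'S_n | Mono b s]| = 1.
Proof.
set m : 'S_n := if b then 1%g else revp n.
rewrite -(cards1 m); apply: eq_card => s; rewrite !inE; apply/idP/idP.
- move/forallP => H.
  have H' : forall i j : 'I_n, i < j -> cmpb b (s i) (s j).
    by move=> i j; move/forallP: (H i) => /(_ j) /implyP.
  apply/eqP/permP => x; rewrite /m; clear m; case: b H' {H} => H'.
  + by rewrite perm1; apply: val_inj; apply: (mono_inc_id (f := fun x => val (s x))) => // i; apply: ltn_ord.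
  + rewrite permE.
    have E : forall y, val (rev_ord (s y)) = val y.
      apply: (mono_inc_id (f := fun y => val (rev_ord (s y)))) => [i j Hij|i]; last exact: ltn_ord.
      by have := H' i j Hij; rewrite /cmpb /=; have := ltn_ord (s i); have := ltn_ord (s j); lia.
    have Ex : rev_ord (s x) = x by apply: val_inj; exact: E.
    by rewrite -{2}Ex rev_ordK.
- move/eqP => ->; apply/forallP => i; apply/forallP => j; apply/implyP => Hij.
  rewrite /m /cmpb; clear m; case: b; first by rewrite !perm1.
  by rewrite !permE /=; have := ltn_ord i; have := ltn_ord j; lia.
Qed.

Lemma lpE0 n j (s : 'S_n) : lift_perm ord0 j s ord0 = j.
Proof. exact: lift_perm_id. Qed.
Lemma lpEl n j (s : 'S_n) k : val (lift_perm ord0 j s (lift ord0 k)) = bump j (s k).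
Proof. by rewrite lift_perm_lift. Qed.

Lemma Dp_lift n b (j : 'I_n.+1) (s : 'S_n) : j != ord0 ->
  Dp b (lift_perm ord0 j s) = Dp b s.
Proof.
move=> Hj; have Hj0 : 0 < j by rewrite lt0n.
apply/idP/idP.
- move/forallP => H; apply/forallP => a; apply/forallP => i; apply/forallP => k.
  apply/implyP => /and3P [Ha Hai Hik].
  move/forallP: (H (lift ord0 a)) => /(_ (lift ord0 i)) /forallP /(_ (lift ord0 k)) /implyP.
  rewrite !lpEl cmpb_bump; apply; rewrite /bump (eqP Ha) !lift0 !ltnS Hai Hik andbT.
  by rewrite leqNgt Hj0.
- move/forallP => H; apply/forallP => a; apply/forallP => i; apply/forallP => k.
  apply/implyP => /and3P [Ha Hai Hik].
  case: (unliftP ord0 a) Ha Hai => [a' ->|->] Ha Hai; last by rewrite lpE0 in Ha; move: Ha Hj0 => /eqP ->.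
  case: (unliftP ord0 i) Hai Hik => [i' ->|->] Hai Hik; last by [].
  case: (unliftP ord0 k) Hik => [k' ->|->] Hik; last by [].
  rewrite !lpEl cmpb_bump.
  move/forallP: (H a') => /(_ i') /forallP /(_ k') /implyP; apply.
  rewrite lpEl /bump in Ha; rewrite !lift0 !ltnS in Hai Hik; rewrite Hai Hik andbT.
  by move: Ha; case: (leqP j (s a')) => /= _; lia.
Qed.

Lemma Dp_lift0 n b (s : 'S_n) : Dp b (lift_perm ord0 ord0 s) = Mono b s.
Proof.
apply/idP/idP.
- move/forallP => H; apply/forallP => i; apply/forallP => k; apply/implyP => Hik.
  move/forallP: (H ord0) => /(_ (lift ord0 i)) /forallP /(_ (lift ord0 k)) /implyP.
  by rewrite !lpEl cmpb_bump lpE0 !lift0 !ltnS Hik; apply.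
- move/forallP => H; apply/forallP => a; apply/forallP => i; apply/forallP => k.
  apply/implyP => /and3P [Ha Hai Hik].
  case: (unliftP ord0 a) Ha Hai => [a' ->|->] Ha Hai; first by rewrite lpEl in Ha.
  case: (unliftP ord0 i) Hai Hik => [i' ->|->] Hai Hik; last by [].
  case: (unliftP ord0 k) Hik => [k' ->|->] Hik; last by [].
  rewrite !lpEl cmpb_bump; rewrite !lift0 !ltnS in Hik.
  by move/forallP: (H i') => /(_ k') /implyP; apply.
Qed.

Lemma Dp_rec n b : #|[set s : 'S_n.+1 | Dp b s]| = 1 + n * #|[set s : 'S_n | Dp b s]|.
Proof.
pose F := fun js : 'I_n.+1 * 'S_n => lift_perm ord0 js.1 js.2.
have Finj : injective F.
  move=> [j s] [j' s'] E; rewrite /F /= in E.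
  have Ej : j = j' by rewrite -(lpE0 j s) -(lpE0 j' s') E.
  subst j'; congr (_, _); apply/permP => k.
  apply: (@lift_inj _ j); rewrite -(lift_perm_lift ord0 j s) -(lift_perm_lift ord0 j s') E //.
have [G FG GF] : bijective F.
  apply: (inj_card_bij Finj); rewrite card_prod card_ord !card_Sn factS.
  by [].
have -> : [set s : 'S_n.+1 | Dp b s] = F @: [set js | Dp b (F js)].
  apply/setP => t; rewrite inE; apply/idP/imsetP => [H|[js]].
  - by exists (G t); rewrite ?inE GF.
  - by rewrite inE => H ->.
rewrite (card_imset _ Finj) -(cardsID [set js : 'I_n.+1 * 'S_n | js.1 == ord0]).
have -> : [set js | Dp b (F js)] :&: [set js : 'I_n.+1 * 'S_n | js.1 == ord0]
          = setX [set ord0] [set s | Mono b s].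
  apply/setP => [[j s]]; rewrite !inE /=.
  by case: eqP => [->|_]; rewrite ?andbT ?andbF ?Dp_lift0.
have -> : [set js | Dp b (F js)] :\: [set js : 'I_n.+1 * 'S_n | js.1 == ord0]
          = setX [set~ ord0] [set s | Dp b s].
  apply/setP => [[j s]]; rewrite !inE /=.
  by case: eqP => [->|/eqP Hj]; rewrite ?andbF //= Dp_lift.
by rewrite !cardsX cards1 Mono_card cardsC1 card_ord.
Qed.

Lemma fact_dvd k n : k <= n -> k`! %| n`!.
Proof.
elim: n => [|n IH]; first by rewrite leqn0 => /eqP ->.
rewrite leq_eqVlt => /orP [/eqP ->//|]; rewrite ltnS => /IH H.
by rewrite factS dvdn_mull.
Qed.

Lemma Dp_count n b : #|[set s : 'S_n.+1 | Dp b s]| = \sum_(k < n.+1) n`! %/ k`!.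
Proof.
elim: n => [|n IH]; first by rewrite Dp_rec big_ord1.
rewrite Dp_rec IH [in RHS]big_ord_recr /= divnn fact_gt0 [in RHS]addnC; congr (_ + _).
rewrite big_distrr /=; apply: eq_bigr => k _.
by rewrite muln_divA ?fact_dvd //; rewrite -ltnS.
Qed.

Definition q0 : 'I_3 := @Ordinal 3 0 isT.
Definition q1 : 'I_3 := @Ordinal 3 1 isT.
Definition q2 : 'I_3 := @Ordinal 3 2 isT.
Definition sig (b : bool) : 'S_3 := if b then perm132 else perm123.

Lemma I3 (x : 'I_3) : [\/ x = q0, x = q1 | x = q2].
Proof.
case: x => [[|[|[|m]]] Hm]; [constructor 1|constructor 2|constructor 3|by []];
  exact: val_inj.
Qed.

Lemma sig0 b : sig b q0 = q0.
Proof. by case: b; rewrite /sig /perm123 /perm132 ?perm1 ?tpermD. Qed.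
Lemma sig1 b : sig b q1 = if b then q2 else q1.
Proof. by case: b; rewrite /sig /perm123 /perm132 ?perm1 ?tpermL. Qed.
Lemma sig2 b : sig b q2 = if b then q1 else q2.
Proof. by case: b; rewrite /sig /perm123 /perm132 ?perm1 ?tpermR. Qed.
Lemma sigV b : ((sig b)^-1)%g = sig b.
Proof. by case: b; rewrite /sig /perm123 /perm132 ?invg1 ?tpermV. Qed.

Lemma bool_iff (b c : bool) : (b -> c) -> (c -> b) -> b = c.
Proof. by case: b; case: c => H1 H2 //; [rewrite H1|rewrite H2]. Qed.

Lemma ord3 n (pi : 'S_n) b (f : 'I_3 -> 'I_n) :
  (forall x y : 'I_3, x < y -> f x < f y) -> val (pi (f q0)) = 0 ->
  ~~ cmpb b (pi (f q1)) (pi (f q2)) ->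
  forall x y : 'I_3, (pi (f x) < pi (f y)) = (sig b x < sig b y).
Proof.
move=> Hf H0 Hc.
have Hne : forall x y : 'I_3, x < y -> (pi (f x) : nat) != pi (f y).
  move=> x y Hxy; apply/eqP => /val_inj /perm_inj E; have := Hf _ _ Hxy; rewrite E ltnn.
  by [].
have h01 : (pi (f q0) : nat) < pi (f q1).
  by have := Hne q0 q1 isT; rewrite H0 lt0n eq_sym.
have h02 : (pi (f q0) : nat) < pi (f q2).
  by have := Hne q0 q2 isT; rewrite H0 lt0n eq_sym.
have h12 : if b then (pi (f q2) : nat) < pi (f q1) else (pi (f q1) : nat) < pi (f q2).
  have := Hne q1 q2 isT; move: Hc; rewrite /cmpb; case: b; rewrite -leqNgt leq_eqVlt;
  case/orP => [/eqP->|//]; rewrite ?eqxx //.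
move=> x y; case: (I3 x) => ->; case: (I3 y) => ->; rewrite ?sig0 ?sig1 ?sig2 ?ltnn //;
  clear Hc; case: b h12 => h12; rewrite /q0 /q1 /q2 /= in h01 h02 h12 *. all: apply: bool_iff => H; lia.
Qed.

Definition Pe b : bvpat := @BVPat 3 (sig b) set0 [set o0].
Definition Pa b : bvpat := @BVPat 3 (sig b) [set o2] [set o0].

Definition mk3 n (a i j : 'I_n) : {ffun 'I_3 -> 'I_n} :=
  [ffun x : 'I_3 => if val x == 0 then a else if val x == 1 then i else j].
Lemma mk3_0 n (a i j : 'I_n) : mk3 a i j q0 = a. Proof. by rewrite ffunE. Qed.
Lemma mk3_1 n (a i j : 'I_n) : mk3 a i j q1 = i. Proof. by rewrite ffunE. Qed.
Lemma mk3_2 n (a i j : 'I_n) : mk3 a i j q2 = j. Proof. by rewrite ffunE. Qed.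

Lemma mk3_inc n (a i j : 'I_n) : a < i -> i < j ->
  forall x y : 'I_3, x < y -> mk3 a i j x < mk3 a i j y.
Proof.
move=> Hai Hij x y; case: (I3 x) => ->; case: (I3 y) => ->;
  rewrite ?mk3_0 ?mk3_1 ?mk3_2 // => _; exact: ltn_trans Hai Hij.
Qed.

Lemma cont_easy n (pi : 'S_n) b X :
  contains pi (@BVPat 3 (sig b) X [set o0]) -> ~~ Dp b pi.
Proof.
case/existsP => f /occurrenceP [H1 H2 H3 H4].
have Y := H4 o0 (set11 o0).
rewrite (occ_valS pi f q0) /= sigV sig0 in Y; case: Y => Y.
apply/negP => /forallP HD.
move: (HD (f q0)) => /forallP /(_ (f q1)) /forallP /(_ (f q2)) /implyP.
have Y0 : val (pi (f q0)) == 0 by apply/eqP; exact: Y.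
rewrite Y0 (H1 q0 q1 isT) (H1 q1 q2 isT) => /(_ isT) Hc.
have := H2 q1 q2; rewrite /= sig1 sig2; move: Hc; rewrite /cmpb.
case: (boolP b) => _ Hc E.
  by move: E; rewrite Hc.
by move: Hc; rewrite ltnNge leq_eqVlt E orbT.
Qed.

Lemma cont_Pe n (pi : 'S_n) b : contains pi (Pe b) = ~~ Dp b pi.
Proof.
apply/idP/idP; first exact: cont_easy.
move/forallPn => [a /forallPn [i /forallPn [j]]]; rewrite negb_imply => /andP [/and3P [Ha Hai Hij] Hc].
apply/existsP; exists (mk3 a i j); apply/(@occurrenceP _ _ (Pe b)); split.
- exact: mk3_inc.
- apply: ord3; [exact: mk3_inc | by rewrite mk3_0 (eqP Ha) | by rewrite mk3_1 mk3_2].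
- by move=> x; rewrite inE.
- move=> y /set1P ->; rewrite (@occ_valS _ pi (Pe b) _ q0) /= sigV sig0 mk3_0.
  by rewrite (eqP Ha).
Qed.

Lemma cmpb_trans b x y z : cmpb b x y -> cmpb b y z -> cmpb b x z.
Proof. by rewrite /cmpb; case: b => H1 H2; [exact: ltn_trans H1 H2|exact: ltn_trans H2 H1]. Qed.

Lemma chain n (pi : 'S_n) b (a : 'I_n) :
  (forall i k : 'I_n, a < i -> (k : nat) = i.+1 -> cmpb b (pi i) (pi k)) ->
  forall i j : 'I_n, a < i -> i < j -> cmpb b (pi i) (pi j).
Proof.
move=> H.
have main : forall d (i j : 'I_n), (j : nat) = i + d.+1 -> a < i -> cmpb b (pi i) (pi j).
  elim=> [|d IH] i j Hj Hai; first by apply: H => //; lia.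
  have Hj' : i + d.+1 < n by have := ltn_ord j; lia.
  apply: (cmpb_trans (y := pi (Ordinal Hj'))).
    by apply: IH.
  by apply: H => /=; lia.
move=> i j Hai Hij; apply: (main (j - i.+1)) => //; lia.
Qed.

Lemma cont_Pa n (pi : 'S_n) b : contains pi (Pa b) = ~~ Dp b pi.
Proof.
apply/idP/idP; first exact: cont_easy.
move/forallPn => [a /forallPn [i /forallPn [j]]]; rewrite negb_imply => /andP [/and3P [Ha Hai Hij] Hc].
case: (boolP [exists i' : 'I_n, exists k : 'I_n, [&& a < i', (k : nat) == i'.+1 & ~~ cmpb b (pi i') (pi k)]]).
- case/existsP => i' /existsP [k /and3P [Hai' /eqP Hk Hc']].
  have Hik : i' < k by rewrite Hk.
  apply/existsP; exists (mk3 a i' k); apply/(@occurrenceP _ _ (Pa b)); split.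
  + exact: mk3_inc.
  + apply: ord3; [exact: mk3_inc | by rewrite mk3_0 (eqP Ha) | by rewrite mk3_1 mk3_2].
  + move=> x /set1P ->; rewrite (@occ_posS _ (Pa b) _ q2) (@occ_posS _ (Pa b) _ q1).
    by rewrite mk3_1 mk3_2; congr _.+1; exact: Hk.
  + move=> y /set1P ->; rewrite (@occ_valS _ pi (Pa b) _ q0) /= sigV sig0 mk3_0.
    by rewrite (eqP Ha).
- move/existsPn => Hn; exfalso; move/negP: Hc; apply.
  apply: (chain (a := a)) => // i' k Hai' Hk; apply/negPn/negP => Hc'.
  by move: (Hn i') => /existsPn /(_ k); rewrite Hai' Hk eqxx Hc'.
Qed.

Lemma an_Pe b n : a_n (Pe b) n = #|[set s : 'S_n | Dp b s]|.
Proof. by rewrite /a_n; apply: eq_card => s; rewrite !inE /avoids cont_Pe negbK. Qed.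
Lemma an_Pa b n : a_n (Pa b) n = #|[set s : 'S_n | Dp b s]|.
Proof. by rewrite /a_n; apply: eq_card => s; rewrite !inE /avoids cont_Pa negbK. Qed.

Lemma pi123 : pat_i p123_0_2 = Pa false.
Proof. by rewrite /pat_i /= -[perm123]/(sig false) sigV. Qed.
Lemma pi132 : pat_i p132_0_2 = Pa true.
Proof. by rewrite /pat_i /= -[perm132]/(sig true) sigV. Qed.

Theorem mainTheorem9 (p : bvpat) :
  (sym_class p123_e_0 p \/ sym_class p123_0_2 p \/
   sym_class p132_e_0 p \/ sym_class p132_0_2 p) ->
  forall n : nat, 0 < n ->
    a_n p n = \sum_(k < n) (n.-1)`! %/ k`!.
Proof.
move=> H [//|m] _ /=.
case: H => [H|[H|[H|H]]]; rewrite (an_class _ H).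
- by rewrite -(Dp_count m false); exact: (an_Pe false).
- by rewrite -an_i pi123 an_Pa Dp_count.
- by rewrite -(Dp_count m true); exact: (an_Pe true).
- by rewrite -an_i pi132 an_Pa Dp_count.
Qed.
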